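(* Let $n\ge 1$ and let $\Gamma$ be the equioriented quiver $1\to 2\to\cdots\to n$ of type $A_n$. For $1\le i\le j\le n$ and $1\le k\le \ell\le n$, we have $M[i,j]\le M[k,\ell]$ if and only if there exists an oriented (connected) path from the vertex of $M[k,\ell]$ to the vertex of $M[i,j]$ in the Auslander--Reiten quiver of $\Gamma$. In particular, a $\Gamma$-representation $M$ is catenoid if and only if the set of its pairwise non-isomorphic indecomposable direct summands is totally ordered with respect to $\le$.
   Context: Representations are finite-dimensional over $\mathbb{C}$. For $1\le i\le j\le n$, $M[i,j]$ denotes the indecomposable $\Gamma$-representation with $\mathbb{C}$ at the vertices $i,\dots,j$, zero elsewhere, and identity maps along arrows between vertices in $[i,j]$; every indecomposable is isomorphic to exactly one $M[i,j]$. The partial order $\le$ is defined by $M[i,j]\le M[k,\ell]$ iff $i\le k$ and $j\le \ell$. The Auslander--Reiten quiver of $\Gamma$ has vertices the pairs $(i,j)$, $1\le i\le j\le n$ (the vertex $(i,j)$ corresponding to $M[i,j]$), and arrows $(i,j)\to(i-1,j)$ and $(i,j)\to(i,j-1)$ whenever the target is a valid pair. A representation $M$ is called catenoid if all its distinct (pairwise non-isomorphic) indecomposable direct summands lie on a single oriented connected path of the Auslander--Reiten quiver. *)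

(* Defs.v *)
From mathcomp Require Import all_boot.
Set Implicit Arguments. Unset Strict Implicit. Unset Printing Implicit Defensive.

(* Vertices of the AR quiver of the equioriented A_n quiver 1 -> 2 -> ... -> n:
   pairs (i,j) with 1 <= i <= j <= n; (i,j) stands for the indecomposable M[i,j]. *)
Definition valid_vert (n : nat) (p : nat * nat) : bool :=
  (1 <= p.1) && (p.1 <= p.2) && (p.2 <= n).

Definition Mle (p q : nat * nat) : bool := (p.1 <= q.1) && (p.2 <= q.2).

Definition ar_arrow (n : nat) (a b : nat * nat) : bool :=
  [&& valid_vert n a, valid_vert n b &
      (b == (a.1.-1, a.2)) && (1 < a.1) || (b == (a.1, a.2.-1)) && (1 < a.2)].

Definition ar_path_from_to (n : nat) (x y : nat * nat) : Prop :=
  exists s : seq (nat * nat), path (ar_arrow n) x s /\ last x s = y.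

(* A representation is described (Krull--Schmidt) by the list of its indecomposable
   direct summands, with multiplicity: M = (+)_{(i,j) in M} M[i,j]. *)
Definition rep_summands := seq (nat * nat).

Definition catenoid (n : nat) (M : rep_summands) : Prop :=
  exists (x : nat * nat) (s : seq (nat * nat)),
    path (ar_arrow n) x s /\ {subset M <= x :: s}.

Definition summands_totally_ordered (M : rep_summands) : Prop :=
  {in M &, forall p q, Mle p q || Mle q p}.

(* Main.v *)
Require Import Defs.
From mathcomp Require Import all_boot.
From mathcomp Require Import zify.
Set Implicit Arguments. Unset Strict Implicit.

Lemma arrow_le n x y : ar_arrow n x y -> Mle y x.
Proof.
case/and3P=> _ _ /orP[/andP[/eqP-> _]|/andP[/eqP-> _]];
  rewrite /Mle /= leq_pred leqnn //.
Qed.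

Lemma Mle_trans a b c : Mle a b -> Mle b c -> Mle a c.
Proof. rewrite /Mle; case/andP=> h1 h2 /andP[h3 h4]; apply/andP; split; lia. Qed.

Lemma path_le n x s : path (ar_arrow n) x s -> forall q, q \in x :: s -> Mle q x.
Proof.
elim: s x => [|y s IH] x /=.
  by move=> _ q; rewrite inE => /eqP->; rewrite /Mle !leqnn.
case/andP=> hxy hp q; rewrite in_cons => /orP[/eqP->|hq].
  by rewrite /Mle !leqnn.
exact: Mle_trans (IH y hp q hq) (arrow_le hxy).
Qed.

Lemma path_tot n x s : path (ar_arrow n) x s ->
  {in x :: s &, forall p q, Mle p q || Mle q p}.
Proof.
elim: s x => [|y s IH] x /=.
  move=> _ p q; rewrite !inE => /eqP-> /eqP->; by rewrite /Mle !leqnn.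
case/andP=> hxy hp p q.
have hle : forall q, q \in x :: y :: s -> Mle q x by apply: (@path_le n); rewrite /= hxy hp.
rewrite in_cons => /orP[/eqP->|hpin]; rewrite in_cons => /orP[/eqP->|hqin].
- by rewrite /Mle !leqnn.
- by rewrite hle ?orbT // in_cons hqin orbT.
- by rewrite hle // in_cons hpin orbT.
- exact: (IH y hp p q hpin hqin).
Qed.

Lemma ptrans n x y z : ar_path_from_to n x y -> ar_path_from_to n y z ->
  ar_path_from_to n x z.
Proof.
case=> s [hs ls] [t [ht lt]]; exists (s ++ t).
by rewrite cat_path last_cat ls hs ht.
Qed.

Lemma down1 n d i l : 1 <= i -> i + d <= l -> l <= n ->
  ar_path_from_to n (i + d, l) (i, l).
Proof.
move=> h1 h2 h3; elim: d h2 => [|d IH] h2.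
  by exists [::]; rewrite addn0.
apply: ptrans (IH ltac:(lia)).
exists [:: (i + d, l)]; split => //=; rewrite andbT.
rewrite /ar_arrow /valid_vert /= addnS /= eqxx /=.
apply/and3P; split.
- lia.
- lia.
- apply/orP; left; lia.
Qed.

Lemma down2 n d i j : 1 <= i -> i <= j -> j + d <= n ->
  ar_path_from_to n (i, j + d) (i, j).
Proof.
move=> h1 h2 h3; elim: d h3 => [|d IH] h3.
  by exists [::]; rewrite addn0.
apply: ptrans (IH ltac:(lia)).
exists [:: (i, j + d)]; split => //=; rewrite andbT.
rewrite /ar_arrow /valid_vert /= addnS /= eqxx /= orbC /=.
apply/and3P; split.
- lia.
- lia.
- lia.
Qed.

Lemma part1 n i j k l :
  1 <= i <= j -> j <= n -> 1 <= k <= l -> l <= n ->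
  (Mle (i, j) (k, l) <-> ar_path_from_to n (k, l) (i, j)).
Proof.
move=> /andP[h1 h2] h3 /andP[h4 h5] h6; split.
- rewrite /Mle /= => /andP[h7 h8].
  apply: (@ptrans _ _ (i, l)).
    have := @down1 n (k - i) i l h1 ltac:(lia) h6.
    by rewrite subnKC.
  have := @down2 n (l - j) i j h1 h2 ltac:(lia).
  by rewrite subnKC.
- case=> s [hs ls]; rewrite -ls; apply: (path_le hs); exact: mem_last.
Qed.

Lemma build n x t : all (valid_vert n) (x :: t) ->
  path (fun a b => Mle b a) x t ->
  exists s, path (ar_arrow n) x s /\ {subset x :: t <= x :: s}.
Proof.
elim: t x => [|y t IH] x /=.
  by move=> _ _; exists [::]; split.
case/and3P=> vx vy vt /andP[hxy hp].
have [s [hs sub]] := IH y ltac:(by rewrite /= vy vt) hp.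
move: vx vy; rewrite /valid_vert => /andP[/andP[a1 a2] a3] /andP[/andP[b1 b2] b3].
move: hxy; rewrite /Mle => /andP[c1 c2].
have [seg [hseg lseg]] := (proj1 (@part1 n y.1 y.2 x.1 x.2 ltac:(lia) b3 ltac:(lia) a3))
  ltac:(rewrite /Mle /=; apply/andP; split; lia).
rewrite -!surjective_pairing in hseg lseg.
exists (seg ++ s); split.
  by rewrite cat_path hseg lseg hs.
move=> q; rewrite inE => /orP[/eqP->|]; first by rewrite mem_head.
move=> hq; have := sub q hq; rewrite in_cons => /orP[/eqP->|hqs].
  have := mem_last x seg; rewrite lseg in_cons => /orP[/eqP->|h]; first by rewrite mem_head.
  by rewrite in_cons mem_cat h orbT.
by rewrite in_cons mem_cat hqs !orbT.
Qed.

Theorem lemma1p2 (n : nat) (hn : 1 <= n) :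
  (forall i j k l : nat,
      1 <= i <= j -> j <= n -> 1 <= k <= l -> l <= n ->
      (Mle (i, j) (k, l) <-> ar_path_from_to n (k, l) (i, j)))
  /\
  (forall M : rep_summands, all (valid_vert n) M ->
      (catenoid n M <-> summands_totally_ordered M)).
Proof.
split; first exact: part1.
move=> M hM; split.
- case=> x [s [hs sub]] p q hp hq; exact: (path_tot hs (sub p hp) (sub q hq)).
- move=> htot.
  have hs : sorted (fun a b => Mle b a) (sort (fun a b => Mle b a) M).
    apply: (@sort_sorted_in _ (mem M)); last by apply/allP.
    move=> a b ha hb; rewrite orbC; exact: htot.
  case E: (sort (fun a b => Mle b a) M) hs => [|x t] hs.
    exists (1, 1), [::]; split => // q; by rewrite -(mem_sort (fun a b => Mle b a)) E.
  have hall : all (valid_vert n) (x :: t).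
    apply/allP => q; rewrite -E mem_sort => hq; exact: (allP hM).
  have [s [hp sub]] := build hall hs.
  exists x, s; split => // q hq; apply: sub; by rewrite -E mem_sort.
Qed.
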